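(* For $1\le a\le n$ and all $u\in\mathbb C$, \[ T^{(a)}_1(u)=\sum_{1\le i_1<i_2<\cdots<i_a\le N}\ \prod_{k=1}^a x_{i_k}\Bigl(u+\frac a2-k\Bigr). \]
   Context: Fix an integer $n\ge 2$ and put $N=2n+2$. Let $Q_a(u)$ ($1\le a\le n$, $u\in\mathbb C$) be algebraically independent commuting indeterminates. Put $d_a=1+\delta_{an}$, $Y_a(u)=Q_a(u-\frac{d_a}{2})/Q_a(u+\frac{d_a}{2})$ for $1\le a\le n$, $Y_0(u)=1$. Let $J=\{1\prec2\prec\cdots\prec n\prec\bar n\prec\cdots\prec\bar2\prec\bar1\}$ be a totally ordered set. For $1\le a\le n$ set $z_a(u)=\frac{Y_a(u+\frac a2)}{Y_{a-1}(u+\frac{a+1}2)}$, $z_{\bar a}(u)=\frac{Y_{a-1}(u+\frac{2n-a+3}2)}{Y_a(u+\frac{2n-a+4}2)}$; set $x_a(u)=z_a(u)$, $x_{2n+3-a}(u)=z_{\bar a}(u)$ for $1\le a\le n$, and $x_{n+1}(u)=-x_{n+2}(u)=\frac{Q_n(u+\frac n2)Q_n(u+\frac{n+4}2)}{Q_n(u+\frac{n+2}2)^2}$. For $1\le a\le n$ define $T^{(a)}_1(u)$ by $T^{(a)}_1(u+\frac12)=\sum z_{i_1}(u+\frac{a-1}2)z_{i_2}(u+\frac{a-3}2)\cdots z_{i_a}(u-\frac{a-1}2)$, the sum running over $(i_1,\dots,i_a)\in J^a$ with $i_1\prec\cdots\prec i_a$ such that whenever $i_k=c$ and $i_l=\bar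 c$ for some $1\le c\le n$, one has $n+k-l\ge c$. *)

(* Defs.v *)
From mathcomp Require Import all_boot all_order all_algebra.
Set Implicit Arguments. Unset Strict Implicit. Unset Printing Implicit Defensive.
Import Order.TTheory GRing.Theory Num.Theory.
Local Open Scope ring_scope.

Section Defs.
(* K : the domain of the spectral parameter u (C in the paper; any number field here)
   F : the field in which the indeterminates Q_a(u) take values *)
Variables (K : numFieldType) (F : fieldType) (n : nat) (Q : nat -> K -> F).

Definition hlf (m : nat) : K := (m%:R) / 2.

Definition dd (a : nat) : nat := if a == n then 2%N else 1%N.

Definition Y (a : nat) (u : K) : F :=
  if a == 0%N then 1 else Q a (u - hlf (dd a)) / Q a (u + hlf (dd a)).

Definition zU (a : nat) (u : K) : F :=
  Y a (u + hlf a) / Y a.-1 (u + hlf a.+1).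

Definition zB (a : nat) (u : K) : F :=
  Y a.-1 (u + hlf (2 * n - a + 3)) / Y a (u + hlf (2 * n - a + 4)).

(* The totally ordered set J = {1 < ... < n < bar n < ... < bar 1} is encoded as
   'I_(2n): position p < n stands for the letter p+1, position p >= n stands
   for bar (2n - p). *)
Definition zJ (j : 'I_(2 * n)) (u : K) : F :=
  if (j < n)%N then zU j.+1 u else zB (2 * n - j) u.

Definition xmid (u : K) : F :=
  Q n (u + hlf n) * Q n (u + hlf (n + 4)) / (Q n (u + hlf (n + 2))) ^+ 2.

Definition x (i : nat) (u : K) : F :=
  if (i <= n)%N then zU i u
  else if i == n.+1 then xmid u
  else if i == n.+2 then - xmid u
  else zB (2 * n + 3 - i) u.

Definition incr (a m : nat) (i : {ffun 'I_a -> 'I_m}) : bool :=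
  [forall k : 'I_a, forall l : 'I_a, (k < l)%N ==> (i k < i l)%N].

(* admissibility: if i_k = c and i_l = bar c then n + k - l >= c *)
Definition admissible (a : nat) (i : {ffun 'I_(a) -> 'I_(2 * n)}) : bool :=
  [forall k : 'I_a, forall l : 'I_a,
     ((i k < n)%N && (n <= i l)%N && (2 * n - i l == (i k).+1)%N)
       ==> ((i k).+1 + l <= n + k)%N].

(* S(u) = sum z_{i_1}(u + (a-1)/2) ... z_{i_a}(u - (a-1)/2);
   the k-th factor (k = 1..a, here k.+1 with k : 'I_a) is evaluated at
   u + (a - (2k - 1))/2. *)
Definition Tsum (a : nat) (u : K) : F :=
  \sum_(i : {ffun 'I_a -> 'I_(2 * n)} | incr i && admissible i)
    \prod_(k < a) zJ (i k) (u + hlf a - hlf (2 * k.+1 - 1)).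

(* T^{(a)}_1 defined by T^{(a)}_1(u + 1/2) = S(u) *)
Definition T1 (a : nat) (u : K) : F := Tsum a (u - hlf 1).

End Defs.

(* Main.v *)
Require Import Defs.
From mathcomp Require Import all_boot all_order all_algebra.
From mathcomp Require Import zify ring.
Set Implicit Arguments. Unset Strict Implicit. Unset Printing Implicit Defensive.
Import Order.TTheory GRing.Theory Num.Theory.

Lemma reindex_img (R : Type) (idx : R) (op : Monoid.com_law idx) (I J : finType)
  (h : J -> I) (P : pred I) (Q : pred J) (F : I -> R) :
  injective h -> (forall j, P (h j) = Q j) -> (forall i, P i -> exists j, h j = i) ->
  \big[op/idx]_(i | P i) F i = \big[op/idx]_(j | Q j) F (h j).
Proof.
move=> hinj hPQ hsurj.
rewrite -(big_imset (A := [pred j | Q j]) _ (in2W hinj)).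
apply: eq_bigl => i; apply/idP/imsetP.
- move=> Hi; have [j hj] := hsurj i Hi; exists j => //.
  by rewrite inE -hPQ hj.
- by case=> j; rewrite inE -hPQ => Hj ->.
Qed.

Lemma incrP a m (i : {ffun 'I_a -> 'I_m}) :
  reflect (forall k l : 'I_a, k < l -> i k < i l) (incr i).
Proof.
apply: (iffP idP).
- by move=> /forallP H k l kl; move: (H k) => /forallP /(_ l) /implyP; apply.
- by move=> H; apply/forallP => k; apply/forallP => l; apply/implyP; apply: H.
Qed.

Lemma incr_le a m (i : {ffun 'I_a -> 'I_m}) (k l : 'I_a) : incr i -> k <= l -> i k <= i l.
Proof.
move=> /incrP H; rewrite leq_eqVlt => /orP [/eqP kl|kl].
- by have -> : k = l by apply: val_inj.
- by apply: ltnW; apply: H.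
Qed.

Definition widf d M (j : {ffun 'I_d -> 'I_M}) : {ffun 'I_d -> 'I_M.+1} :=
  [ffun k => widen_ord (leqnSn M) (j k)].
Definition shf d M (j : {ffun 'I_d -> 'I_M}) : {ffun 'I_d -> 'I_M.+1} :=
  [ffun k => lift ord0 (j k)].
Definition snocf d M (j : {ffun 'I_d -> 'I_M}) : {ffun 'I_d.+1 -> 'I_M.+1} :=
  [ffun k => if unlift ord_max k is Some k' then widen_ord (leqnSn M) (j k') else ord_max].
Definition consf d M (j : {ffun 'I_d -> 'I_M}) : {ffun 'I_d.+1 -> 'I_M.+1} :=
  [ffun k => if unlift ord0 k is Some k' then lift ord0 (j k') else ord0].

Lemma widfE d M (j : {ffun 'I_d -> 'I_M}) k : val (widf j k) = j k.
Proof. by rewrite ffunE. Qed.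
Lemma shfE d M (j : {ffun 'I_d -> 'I_M}) k : val (shf j k) = (j k).+1.
Proof. by rewrite ffunE. Qed.
Lemma snocf_max d M (j : {ffun 'I_d -> 'I_M}) : val (snocf j ord_max) = M.
Proof. by rewrite ffunE unlift_none. Qed.
Lemma snocf_lift d M (j : {ffun 'I_d -> 'I_M}) k : val (snocf j (lift ord_max k)) = j k.
Proof. by rewrite ffunE liftK. Qed.
Lemma consf0 d M (j : {ffun 'I_d -> 'I_M}) : val (consf j ord0) = 0.
Proof. by rewrite ffunE unlift_none. Qed.
Lemma consf_lift d M (j : {ffun 'I_d -> 'I_M}) k : val (consf j (lift ord0 k)) = (j k).+1.
Proof. by rewrite ffunE liftK. Qed.

Lemma widf_inj d M : injective (@widf d M).
Proof.
move=> j1 j2 H; apply/ffunP => k; apply: val_inj.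
by have := congr1 (fun f : {ffun _ -> _} => val (f k)) H; rewrite /= !widfE.
Qed.
Lemma shf_inj d M : injective (@shf d M).
Proof.
move=> j1 j2 H; apply/ffunP => k; apply: val_inj.
by have := congr1 (fun f : {ffun _ -> _} => val (f k)) H; rewrite /= !shfE => -[].
Qed.
Lemma snocf_inj d M : injective (@snocf d M).
Proof.
move=> j1 j2 H; apply/ffunP => k; apply: val_inj.
by have := congr1 (fun f : {ffun _ -> _} => val (f (lift ord_max k))) H; rewrite /= !snocf_lift.
Qed.
Lemma consf_inj d M : injective (@consf d M).
Proof.
move=> j1 j2 H; apply/ffunP => k; apply: val_inj.
by have := congr1 (fun f : {ffun _ -> _} => val (f (lift ord0 k))) H; rewrite /= !consf_lift => -[].
Qed.

Lemma incr_widf d M (j : {ffun 'I_d -> 'I_M}) : incr (widf j) = incr j.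
Proof.
apply/incrP/incrP => H k l kl; move: (H k l kl); by rewrite !widfE.
Qed.
Lemma incr_shf d M (j : {ffun 'I_d -> 'I_M}) : incr (shf j) = incr j.
Proof.
apply/incrP/incrP => H k l kl; move: (H k l kl); by rewrite !shfE.
Qed.

Lemma lift_max_val n (k : 'I_n) : val (lift ord_max k) = k.
Proof. by rewrite /= /bump leqNgt ltn_ord. Qed.
Lemma lift0_val n (k : 'I_n) : val (lift ord0 k) = k.+1.
Proof. by []. Qed.

Lemma incr_snocf d M (j : {ffun 'I_d -> 'I_M}) : incr (snocf j) = incr j.
Proof.
apply/incrP/incrP => H.
- move=> k l kl; have := H (lift ord_max k) (lift ord_max l).
  by rewrite !snocf_lift !lift_max_val; apply.
- move=> k l; case: (unliftP ord_max k) => [k' ->|->];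
  case: (unliftP ord_max l) => [l' ->|->].
  + by rewrite !snocf_lift !lift_max_val; apply: H.
  + by rewrite snocf_lift snocf_max.
  + rewrite lift_max_val /= => lt; exfalso; move: (ltn_ord l') lt => /=; lia.
  + by rewrite ltnn.
Qed.

Lemma incr_consf d M (j : {ffun 'I_d -> 'I_M}) : incr (consf j) = incr j.
Proof.
apply/incrP/incrP => H.
- move=> k l kl; have := H (lift ord0 k) (lift ord0 l).
  by rewrite !consf_lift !lift0_val ltnS; apply.
- move=> k l; case: (unliftP ord0 k) => [k' ->|->];
  case: (unliftP ord0 l) => [l' ->|->].
  + by rewrite !consf_lift !lift0_val ltnS; apply: H.
  + by rewrite lift0_val.
  + by rewrite consf_lift consf0.
  + by rewrite ltnn.
Qed.


Definition emptyf (T : Type) : {ffun 'I_0 -> T} := [ffun x : 'I_0 => False_rect T (ltac:(by case: x))].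

Lemma sum_dom0 (R : zmodType) M (Phi : {ffun 'I_0 -> 'I_M} -> R) :
  (\sum_(i : {ffun 'I_0 -> 'I_M} | incr i) Phi i = Phi (emptyf 'I_M))%R.
Proof.
rewrite (big_pred1 (emptyf 'I_M)) // => i /=.
have -> : incr i by apply/incrP => -[].
by symmetry; apply/eqP/ffunP => -[].
Qed.

Lemma sum_cod0 (R : zmodType) k (Phi : {ffun 'I_k.+1 -> 'I_0} -> R) :
  (\sum_(i : {ffun 'I_k.+1 -> 'I_0} | incr i) Phi i = 0)%R.
Proof. by rewrite big_pred0 // => i; case: (i ord0). Qed.

Lemma peelA (R : zmodType) k M (Phi : {ffun 'I_k.+1 -> 'I_M.+1} -> R) :
  (\sum_(i | incr i) Phi i =
  \sum_(j : {ffun 'I_k.+1 -> 'I_M} | incr j) Phi (widf j) +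
  \sum_(j : {ffun 'I_k -> 'I_M} | incr j) Phi (snocf j))%R.
Proof.
rewrite (bigID (fun i : {ffun 'I_k.+1 -> 'I_M.+1} => val (i ord_max) == M)) /= addrC.
congr (_ + _)%R.
- apply: reindex_img; first exact: (@widf_inj).
  + move=> j; rewrite incr_widf widfE.
    by have := ltn_ord (j ord_max); case: eqP => [->|]; rewrite ?ltnn ?andbT.
  + move=> i /andP [inc ne].
    have Hx : forall x, i x < M.
      move=> x; have := incr_le inc (leq_ord x : x <= @ord_max k).
      have := ltn_ord (i ord_max); move: ne; rewrite /=; lia.
    exists [ffun x => Ordinal (Hx x)]; apply/ffunP => x; apply: val_inj.
    by rewrite widfE ffunE.
- apply: reindex_img; first exact: (@snocf_inj).
  + by move=> j; rewrite incr_snocf snocf_max eqxx andbT.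
  + move=> i /andP [inc /eqP e].
    have Hx : forall x : 'I_k, i (lift ord_max x) < M.
      move=> x; apply: (leq_trans _ (eq_leq e)); apply: (elimT (incrP _) inc).
      by rewrite lift_max_val /=.
    exists [ffun x => Ordinal (Hx x)]; apply/ffunP => y; apply: val_inj.
    case: (unliftP ord_max y) => [y' ->|->].
    * by rewrite snocf_lift ffunE.
    * by rewrite snocf_max; apply: esym.
Qed.

Lemma peelB (R : zmodType) k M (Phi : {ffun 'I_k.+1 -> 'I_M.+1} -> R) :
  (\sum_(i | incr i) Phi i =
  \sum_(j : {ffun 'I_k.+1 -> 'I_M} | incr j) Phi (shf j) +
  \sum_(j : {ffun 'I_k -> 'I_M} | incr j) Phi (consf j))%R.
Proof.
rewrite (bigID (fun i : {ffun 'I_k.+1 -> 'I_M.+1} => val (i ord0) == 0%N)) /= addrC.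
congr (_ + _)%R.
- apply: reindex_img; first exact: (@shf_inj).
  + by move=> j; rewrite incr_shf shfE andbT.
  + move=> i /andP [inc ne].
    have Hx : forall x, (i x).-1 < M.
      move=> x; have := incr_le inc (leq0n x : @ord0 k <= x).
      have := ltn_ord (i x); move: ne; rewrite /=; lia.
    exists [ffun x => Ordinal (Hx x)]; apply/ffunP => x; apply: val_inj.
    rewrite shfE ffunE /=.
    have := incr_le inc (leq0n x : @ord0 k <= x); move: ne; rewrite /=; lia.
- apply: reindex_img; first exact: (@consf_inj).
  + by move=> j; rewrite incr_consf consf0 eqxx andbT.
  + move=> i /andP [inc /eqP e].
    have Hp : forall x : 'I_k, 0 < i (lift ord0 x).
      move=> x; have := (elimT (incrP _) inc) ord0 (lift ord0 x) isT.
      by rewrite e.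
    have Hx : forall x : 'I_k, (i (lift ord0 x)).-1 < M.
      move=> x; have := Hp x; have := ltn_ord (i (lift ord0 x)); lia.
    exists [ffun x => Ordinal (Hx x)]; apply/ffunP => y; apply: val_inj.
    case: (unliftP ord0 y) => [y' ->|->].
    * by rewrite consf_lift ffunE /= prednK //; apply: Hp.
    * by rewrite consf0; apply: esym.
Qed.

Section S.
Variables (K : numFieldType) (F : fieldType).

Lemma widfN d M (j : {ffun 'I_d -> 'I_M}) k : nat_of_ord (widf j k) = j k.
Proof. exact: widfE. Qed.
Lemma shfN d M (j : {ffun 'I_d -> 'I_M}) k : nat_of_ord (shf j k) = (j k).+1.
Proof. exact: shfE. Qed.
Lemma snocf_maxN d M (j : {ffun 'I_d -> 'I_M}) : nat_of_ord (snocf j ord_max) = M.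
Proof. exact: snocf_max. Qed.
Lemma snocf_liftN d M (j : {ffun 'I_d -> 'I_M}) k : nat_of_ord (snocf j (lift ord_max k)) = j k.
Proof. exact: snocf_lift. Qed.
Lemma consf0N d M (j : {ffun 'I_d -> 'I_M}) : nat_of_ord (consf j ord0) = 0.
Proof. exact: consf0. Qed.
Lemma consf_liftN d M (j : {ffun 'I_d -> 'I_M}) k : nat_of_ord (consf j (lift ord0 k)) = (j k).+1.
Proof. exact: consf_lift. Qed.
Lemma widen_lift n (x : 'I_n) : widen_ord (leqnSn n) x = lift ord_max x.
Proof. by apply: val_inj; rewrite /= /bump leqNgt ltn_ord. Qed.

Lemma lift_maxN n (x : 'I_n) : nat_of_ord (lift ord_max x) = x.
Proof. exact: lift_max_val. Qed.

Local Open Scope ring_scope.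

Definition Ssum (N : nat) (g : nat -> K -> F) (d : nat) (v : K) : F :=
  \sum_(i : {ffun 'I_d -> 'I_N} | incr i) \prod_(k < d) g (i k) (v - k%:R).

Definition admN (m N d : nat) (i : {ffun 'I_d -> 'I_N}) : bool :=
  [forall k : 'I_d, forall l : 'I_d,
     ((i k < m)%N && (m <= i l)%N && (N - i l == (i k).+1)%N)
       ==> ((i k).+1 + l <= m + k)%N].

Definition SA (m N : nat) (g : nat -> K -> F) (d : nat) (v : K) : F :=
  \sum_(i : {ffun 'I_d -> 'I_N} | incr i)
     (if admN m i then \prod_(k < d) g (i k) (v - k%:R) else 0).

Definition Rec (z zb : K -> F) (tr : nat -> bool) (G : nat -> K -> F) (d : nat) (v : K) : F :=
  G d v + (if d is k.+1 then z v * G k (v - 1) + G k v * zb (v - k%:R) else 0)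
  + (if d is k.+2 then (if tr k then z v * G k (v - 1) * zb (v - k.+1%:R) else 0) else 0).

Definition sh (g : nat -> K -> F) : nat -> K -> F := fun p => g p.+1.

Lemma Ssum0 N g v : Ssum N g 0 v = 1.
Proof. by rewrite /Ssum sum_dom0 big_ord0. Qed.

Lemma SsumE0 g d v : Ssum 0 g d.+1 v = 0.
Proof. by rewrite /Ssum sum_cod0. Qed.

Lemma SA0 m N g v : SA m N g 0 v = 1.
Proof.
rewrite /SA sum_dom0 big_ord0.
by have -> : admN m (emptyf 'I_N) by apply/forallP => -[].
Qed.

Lemma SAE0 m g d v : SA m 0 g d.+1 v = 0.
Proof. by rewrite /SA sum_cod0. Qed.

Lemma shiftv (v : K) (x : nat) : v - 1 - x%:R = v - x.+1%:R.
Proof. by rewrite -addrA -opprD nat1r. Qed.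

Lemma Ssum_peel M g d v :
  Ssum M.+2 g d v = Rec (g 0%N) (g M.+1) (fun _ => true) (Ssum M (sh g)) d v.
Proof.
case: d => [|k]; first by rewrite /Rec !Ssum0 !addr0.
rewrite {1}/Ssum peelA peelB.
set T1 := \sum_(j | _) _.
have -> : T1 = Ssum M (sh g) k.+1 v.
  by apply: eq_bigr => j _; apply: eq_bigr => x _; rewrite widfN shfN.
set T2 := \sum_(j | _) _.
have -> : T2 = g 0%N v * Ssum M (sh g) k (v - 1).
  rewrite /Ssum mulr_sumr; apply: eq_bigr => j _.
  rewrite big_ord_recl widfN consf0N subr0; congr (_ * _).
  by apply: eq_bigr => x _; rewrite widfN consf_liftN /sh shiftv.
clear T1 T2; case: k => [|k].
  rewrite sum_dom0 /Rec !Ssum0 big_ord_recr big_ord0 /= snocf_maxN.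
  by rewrite addr0 !mul1r mulr1 addrA.
rewrite peelB.
set T3 := \sum_(j | _) _.
have -> : T3 = Ssum M (sh g) k.+1 v * g M.+1 (v - k.+1%:R).
  rewrite /Ssum mulr_suml; apply: eq_bigr => j _.
  rewrite big_ord_recr snocf_maxN; congr (_ * _).
  by apply: eq_bigr => x _; rewrite widen_lift snocf_liftN shfN lift_maxN.
set T4 := \sum_(j | _) _.
have -> : T4 = g 0%N v * Ssum M (sh g) k (v - 1) * g M.+1 (v - k.+1%:R).
  rewrite /Ssum mulr_sumr mulr_suml; apply: eq_bigr => j _.
  rewrite big_ord_recr snocf_maxN big_ord_recl /=.
  rewrite widen_lift snocf_liftN /= consf0N subr0; congr (_ * _ * _).
  apply: eq_bigr => x _; rewrite widen_lift snocf_liftN consf_liftN /sh.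
  by rewrite /bump /= add1n shiftv.
by rewrite /Rec /= !addrA.
Qed.

End S.

Lemma lift0N n (x : 'I_n) : nat_of_ord (lift ord0 x) = x.+1.
Proof. by []. Qed.

Lemma admNP m N d (i : {ffun 'I_d -> 'I_N}) :
  reflect (forall k l : 'I_d, i k < m -> m <= i l -> N - i l = (i k).+1 ->
             (i k).+1 + l <= m + k) (admN m i).
Proof.
apply: (iffP forallP) => H.
- move=> k l h1 h2 h3; move: (H k) => /forallP /(_ l) /implyP; apply.
  by rewrite h1 h2 h3 eqxx.
- move=> k; apply/forallP => l; apply/implyP => /andP [/andP [h1 h2] /eqP h3].
  exact: H.
Qed.

Lemma adm_ws m d (j : {ffun 'I_d -> 'I_(2 * m)}) :
  admN m.+1 (widf (shf j) : {ffun 'I_d -> 'I_((2 * m).+2)}) = admN m j.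
Proof.
apply/admNP/admNP => H k l.
- have := H k l; rewrite !widfN !shfN => h h1 h2 h3.
  have := ltn_ord (j l); lia.
- rewrite !widfN !shfN => h1 h2 h3.
  have := H k l; have := ltn_ord (j l); lia.
Qed.

Lemma adm_wc m d (j : {ffun 'I_d -> 'I_(2 * m)}) :
  admN m.+1 (widf (consf j) : {ffun 'I_d.+1 -> 'I_((2 * m).+2)}) = admN m j.
Proof.
apply/admNP/admNP => H k l.
- have := H (lift ord0 k) (lift ord0 l); rewrite !widfN !consf_liftN !lift0N => h h1 h2 h3.
  have := ltn_ord (j l); lia.
- case: (unliftP ord0 k) => [k' ->|->]; case: (unliftP ord0 l) => [l' ->|->];
  rewrite !widfN ?consf_liftN ?consf0N ?lift0N => h1 h2 h3.
  + have := H k' l'; have := ltn_ord (j l'); lia.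
  + lia.
  + have := ltn_ord (j l'); lia.
  + lia.
Qed.

Lemma adm_sc m d (j : {ffun 'I_d -> 'I_(2 * m)}) :
  admN m.+1 (snocf (shf j) : {ffun 'I_d.+1 -> 'I_((2 * m).+2)}) = admN m j.
Proof.
apply/admNP/admNP => H k l.
- have := H (lift ord_max k) (lift ord_max l); rewrite !snocf_liftN !shfN !lift_maxN => h h1 h2 h3.
  have := ltn_ord (j l); lia.
- case: (unliftP ord_max k) => [k' ->|->]; case: (unliftP ord_max l) => [l' ->|->];
  rewrite ?snocf_liftN ?shfN ?snocf_maxN ?lift_maxN => h1 h2 h3.
  + have := H k' l'; have := ltn_ord (j l'); lia.
  + have := ltn_ord (j k'); lia.
  + lia.
  + lia.
Qed.

Lemma ord_maxN n : nat_of_ord (@ord_max n) = n.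
Proof. by []. Qed.
Lemma ord0N n : nat_of_ord (@ord0 n) = 0.
Proof. by []. Qed.

Lemma adm_sb m d (j : {ffun 'I_d -> 'I_(2 * m)}) :
  admN m.+1 (snocf (consf j) : {ffun 'I_d.+2 -> 'I_((2 * m).+2)}) = admN m j && (d < m).
Proof.
apply/admNP/andP => [H|[/admNP H dm] k l].
- split.
  + apply/admNP => k l h1 h2 h3.
    have := H (lift ord_max (lift ord0 k)) (lift ord_max (lift ord0 l)).
    rewrite !snocf_liftN !consf_liftN !lift_maxN !lift0N.
    have := ltn_ord (j l); lia.
  + have := H (lift ord_max ord0) ord_max.
    rewrite snocf_liftN consf0N snocf_maxN lift_maxN ord0N ord_maxN; lia.
- case: (unliftP ord_max k) => [k' ->|->]; case: (unliftP ord_max l) => [l' ->|->];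
  rewrite ?snocf_liftN ?snocf_maxN ?lift_maxN ?ord_maxN.
  + case: (unliftP ord0 k') => [k'' ->|->]; case: (unliftP ord0 l') => [l'' ->|->];
    rewrite ?consf_liftN ?consf0N ?lift0N ?ord0N.
    * have := H k'' l''; have := ltn_ord (j l''); lia.
    * lia.
    * have := ltn_ord (j l''); lia.
    * lia.
  + case: (unliftP ord0 k') => [k'' ->|->]; rewrite ?consf_liftN ?consf0N ?lift0N ?ord0N.
    * lia.
    * lia.
  + case: (unliftP ord0 l') => [l'' ->|->]; rewrite ?consf_liftN ?consf0N ?lift0N ?ord0N.
    * have := ltn_ord (j l''); lia.
    * lia.
  + lia.
Qed.

Section SAP.
Variables (K : numFieldType) (F : fieldType).
Local Open Scope ring_scope.

Lemma SA_peel m (g : nat -> K -> F) d v :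
  SA m.+1 (2 * m).+2 g d v =
  Rec (g 0%N) (g (2 * m).+1) (fun k => (k < m)%N) (SA m (2 * m) (sh g)) d v.
Proof.
case: d => [|k]; first by rewrite /Rec !SA0 !addr0.
rewrite {1}/SA peelA peelB.
set T1 := \sum_(j | _) _.
have -> : T1 = SA m (2 * m) (sh g) k.+1 v.
  apply: eq_bigr => j _; rewrite adm_ws; case: ifP => // _.
  by apply: eq_bigr => x _; rewrite widfN shfN.
set T2 := \sum_(j | _) _.
have -> : T2 = g 0%N v * SA m (2 * m) (sh g) k (v - 1).
  rewrite /SA mulr_sumr; apply: eq_bigr => j _.
  rewrite adm_wc; case: ifP => _; last by rewrite mulr0.
  rewrite big_ord_recl widfN consf0N subr0; congr (_ * _).
  by apply: eq_bigr => x _; rewrite widfN consf_liftN /sh shiftv.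
clear T1 T2; case: k => [|k].
  rewrite sum_dom0 /Rec !SA0.
  have -> : admN m.+1 (snocf (emptyf 'I_(2 * m).+1)).
    apply/admNP => k l; have -> : k = ord_max by apply/val_inj; case: k => -[].
    by rewrite snocf_maxN; lia.
  rewrite big_ord_recr big_ord0 /= snocf_maxN.
  by rewrite addr0 !mul1r mulr1 addrA.
rewrite peelB.
set T3 := \sum_(j | _) _.
have -> : T3 = SA m (2 * m) (sh g) k.+1 v * g (2 * m).+1 (v - k.+1%:R).
  rewrite /SA mulr_suml; apply: eq_bigr => j _.
  rewrite adm_sc; case: ifP => _; last by rewrite mul0r.
  rewrite big_ord_recr snocf_maxN; congr (_ * _).
  by apply: eq_bigr => x _; rewrite widen_lift snocf_liftN shfN lift_maxN.
set T4 := \sum_(j | _) _.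
have -> : T4 = (if (k < m)%N then g 0%N v * SA m (2 * m) (sh g) k (v - 1) * g (2 * m).+1 (v - k.+1%:R) else 0).
  case: ifP => km; last first.
    by apply: big1 => j _; rewrite adm_sb km andbF.
  rewrite /SA mulr_sumr mulr_suml; apply: eq_bigr => j _.
  rewrite adm_sb km andbT; case: ifP => _; last by rewrite mulr0 mul0r.
  rewrite big_ord_recr snocf_maxN big_ord_recl /=.
  rewrite widen_lift snocf_liftN /= consf0N subr0; congr (_ * _ * _).
  apply: eq_bigr => x _; rewrite widen_lift snocf_liftN consf_liftN /sh.
  by rewrite /bump /= add1n shiftv.
by rewrite /Rec /= !addrA.
Qed.

End SAP.

Local Open Scope ring_scope.

Section Ident.
Variables (K : numFieldType) (F : fieldType) (n : nat) (Q : nat -> K -> F).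
Hypothesis hQ : forall (a : nat) (u : K), (1 <= a <= n)%N -> Q a u != 0.

Lemma Y_neq0 a u : (a <= n)%N -> Y n Q a u != 0.
Proof.
rewrite /Y; case: a => [|a] an /=; first exact: oner_neq0.
rewrite mulf_neq0 // ?invr_eq0; apply: hQ; lia.
Qed.

Lemma hlfE k : hlf K k = k%:R / 2.
Proof. by []. Qed.

Lemma I1 m p : (m.+2 <= n)%N ->
  zU n Q (n - m.+1) p * zB n Q (n - m.+1) (p - m.+2%:R) =
  zU n Q (n - m) p * zB n Q (n - m) (p - m.+2%:R).
Proof.
move=> mn.
set c := (n - m.+1)%N.
have nE : n = (c + m.+1)%N by rewrite /c; lia.
have c1 : (n - m = c.+1)%N by rewrite /c; lia.
rewrite c1 /zU /zB.
have -> : (c.+1.-1 = c)%N by [].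
set a0 := p + hlf K c.
have E1 : p + hlf K c.+1 = a0 + 2^-1 by rewrite /a0 !hlfE; field.
have E2 : p - m.+2%:R + hlf K (2 * n - c + 3) = a0 + 2^-1.
  by rewrite /a0 (_ : (2 * n - c + 3 = c + 2 * m + 5)%N) ?hlfE; [field|lia].
have E3 : p - m.+2%:R + hlf K (2 * n - c + 4) = a0 + 1.
  by rewrite /a0 (_ : (2 * n - c + 4 = c + 2 * m + 6)%N) ?hlfE; [field|lia].
have E4 : p + hlf K c.+2 = a0 + 1 by rewrite /a0 !hlfE; field.
have E5 : p - m.+2%:R + hlf K (2 * n - c.+1 + 3) = a0.
  by rewrite /a0 (_ : (2 * n - c.+1 + 3 = c + 2 * m + 4)%N) ?hlfE; [field|lia].
have E6 : p - m.+2%:R + hlf K (2 * n - c.+1 + 4) = a0 + 2^-1.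
  by rewrite /a0 (_ : (2 * n - c.+1 + 4 = c + 2 * m + 5)%N) ?hlfE; [field|lia].
rewrite E1 E2 E3 E4 E5 E6 -/a0.
have h1 : Y n Q c.-1 (a0 + 2^-1) != 0 by apply: Y_neq0; lia.
have h2 : Y n Q c.+1 (a0 + 2^-1) != 0 by apply: Y_neq0; lia.
have h3 : Y n Q c (a0 + 1) != 0 by apply: Y_neq0; lia.
by field; rewrite h1 h2 h3.
Qed.

Lemma I2 p : (1 <= n)%N ->
  zU n Q n p * zB n Q n (p - 1) = xmid n Q p * xmid n Q (p - 1).
Proof.
move=> n1.
rewrite /zU /zB /xmid /Y.
have -> : (n == 0%N) = false by apply/eqP; lia.
rewrite /dd eqxx.
set t := p + hlf K n.
have E1 : p + hlf K n - hlf K 2 = t - 1 by rewrite /t !hlfE; field.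
have E2 : p + hlf K n + hlf K 2 = t + 1 by rewrite /t !hlfE; field.
have E3 : p + hlf K n.+1 = t + 2^-1 by rewrite /t !hlfE; field.
have E4 : p - 1 + hlf K (2 * n - n + 3) = t + 2^-1.
  by rewrite /t (_ : (2 * n - n + 3 = n + 3)%N) ?hlfE; [field|lia].
have E5 : p - 1 + hlf K (2 * n - n + 4) - hlf K 2 = t.
  by rewrite /t (_ : (2 * n - n + 4 = n + 4)%N) ?hlfE; [field|lia].
have E6 : p - 1 + hlf K (2 * n - n + 4) + hlf K 2 = t + 2.
  by rewrite /t (_ : (2 * n - n + 4 = n + 4)%N) ?hlfE; [field|lia].
have E7 : p + hlf K (n + 4) = t + 2 by rewrite /t !hlfE; field.
have E8 : p + hlf K (n + 2) = t + 1 by rewrite /t !hlfE; field.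
have E9 : p - 1 + hlf K n = t - 1 by rewrite /t !hlfE; field.
have E10 : p - 1 + hlf K (n + 4) = t + 1 by rewrite /t !hlfE; field.
have E11 : p - 1 + hlf K (n + 2) = t by rewrite /t !hlfE; field.
rewrite E1 E2 E3 E4 E5 E6 E7 E8 E9 E10 E11 -/t.
have hy : Y n Q n.-1 (t + 2^-1) != 0 by apply: Y_neq0; lia.
rewrite /Y in hy.
have q1 : Q n (t - 1) != 0 by apply: hQ; lia.
have q2 : Q n t != 0 by apply: hQ; lia.
have q3 : Q n (t + 1) != 0 by apply: hQ; lia.
have q4 : Q n (t + 2) != 0 by apply: hQ; lia.
move: hy; set y := (if _ then _ else _) => hy.
by field; rewrite q2 q3 q4 hy.
Qed.

End Ident.

Local Open Scope ring_scope.

Section Gen.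
Variables (K : numFieldType) (F : fieldType).

Definition ext (G : nat -> K -> F) (e : int) (w : K) : F :=
  match e with Posz k => G k w | Negz _ => 0 end.

Definition trZ (z zb : K -> F) (tr : nat -> bool) (G : nat -> K -> F) (e : int) (v : K) : F :=
  match (e - 2)%R with
  | Posz k => if tr k then z v * G k (v - 1) * zb (v - (e - 1)%:~R) else 0
  | Negz _ => 0 end.

Lemma ext_Rec z zb tr G e v :
  ext (Rec z zb tr G) e v = ext G e v + z v * ext G (e - 1) (v - 1)
     + ext G (e - 1) v * zb (v - (e - 1)%:~R) + trZ z zb tr G e v.
Proof.
rewrite /trZ; case: e => [d|d].
- case: d => [|[|k]].
  + rewrite (_ : Posz 0 - 1 = Negz 0); last by lia.
    rewrite (_ : Posz 0 - 2 = Negz 1); last by lia.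
    by rewrite /= /Rec /= !mulr0 !mul0r !addr0.
  + rewrite (_ : Posz 1 - 1 = Posz 0); last by lia.
    rewrite (_ : Posz 1 - 2 = Negz 0); last by lia.
    by rewrite /= /Rec /= !addrA.
  + rewrite (_ : Posz k.+2 - 1 = Posz k.+1); last by lia.
    rewrite (_ : Posz k.+2 - 2 = Posz k); last by lia.
    by rewrite /= /Rec !addrA.
- rewrite (_ : Negz d - 1 = Negz d.+1); last by lia.
  rewrite (_ : Negz d - 2 = Negz d.+2); last by lia.
  by rewrite /= !mulr0 !mul0r !addr0.
Qed.

Definition prodL (f : K -> F) (j : nat) (v : K) : F := \prod_(i < j) f (v - i%:R).

Lemma prodL_recl f j v : prodL f j.+1 v = f v * prodL f j (v - 1).
Proof.
rewrite /prodL big_ord_recl subr0; congr (_ * _); apply: eq_bigr => i _.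
by rewrite lift0N -natr1; congr f; ring.
Qed.

Lemma prodL_recr f j v : prodL f j.+1 v = prodL f j v * f (v - j%:R).
Proof. by rewrite /prodL big_ord_recr. Qed.

Definition Pg (z zb : K -> F) (s : K) (j : nat) (v : K) : F :=
  prodL z j v * prodL zb j (v - s).

Lemma PgA z zb s j v :
  Pg z zb (s + 1) j.+1 v = z v * Pg z zb s j (v - 1) * zb (v - (s + 1) - j%:R).
Proof.
rewrite /Pg prodL_recl prodL_recr (_ : v - 1 - s = v - (s + 1)); last by ring.
by rewrite !mulrA.
Qed.

Lemma PgB z zb s j v :
  Pg z zb (s + 1) j v * z (v - j%:R) = z v * Pg z zb s j (v - 1).
Proof.
rewrite /Pg mulrAC -prodL_recr prodL_recl.
by rewrite (_ : v - 1 - s = v - (s + 1)); [ring|ring].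
Qed.

Lemma PgC z zb s j v :
  Pg z zb (s + 1) j v * zb (v - s) = Pg z zb s j v * zb (v - s - j%:R).
Proof.
rewrite /Pg -!mulrA -prodL_recr prodL_recl.
by rewrite (_ : v - s - 1 = v - (s + 1)); [ring|ring].
Qed.

Lemma PgD z zb s j v :
  Pg z zb (s + 1) j v * z (v - j%:R) * zb (v - s) = Pg z zb s j.+1 v.
Proof.
rewrite /Pg prodL_recr prodL_recl.
by rewrite (_ : v - s - 1 = v - (s + 1)); [ring|ring].
Qed.

End Gen.

Local Open Scope ring_scope.

Section Main.
Variables (K : numFieldType) (F : fieldType) (n : nat) (Q : nat -> K -> F).
Hypothesis hQ : forall (a : nat) (u : K), (1 <= a <= n)%N -> Q a u != 0.
Hypothesis hn : (1 <= n)%N.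

Definition zc m := zU n Q (n - m).
Definition zbc m := zB n Q (n - m).

Fixpoint Ad (m : nat) : nat -> K -> F :=
  if m is m'.+1 then Rec (zc m') (zbc m') (fun k => (k < m')%N) (Ad m')
  else (fun d _ => if d == 0%N then 1 else 0).

Fixpoint Rd (m : nat) : nat -> K -> F :=
  if m is m'.+1 then Rec (zc m') (zbc m') xpredT (Rd m')
  else Rec (xmid n Q) (fun u => - xmid n Q u) xpredT (Ad 0).

Lemma Ad_vanish m k w : (m < k)%N -> Ad m k w = 0.
Proof.
elim: m k w => [|m IH] k w mk /=; first by case: k mk.
case: k mk => [|[|k]] // mk.
rewrite /Rec (_ : (k < m)%N = false); last by lia.
rewrite !IH; try lia.
by rewrite !mulr0 !mul0r !addr0.
Qed.

Lemma ext_vanish m e w : (Posz m < e) -> ext (Ad m) e w = 0.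
Proof. by case: e => // k; rewrite ltz_nat => mk; apply: Ad_vanish. Qed.

Definition PZ (m : nat) (e : int) (v : K) : F :=
  match e with Posz j => Pg (zc m) (zbc m) (m.+1%:R) j v | Negz _ => 1 end.

Lemma main_base (e : int) v :
  ext (Rd 0) e v - ext (Ad 0) e v =
  - PZ 0 (e - Posz 1) v * ext (Ad 0) (Posz 2 - e) (v - (e - Posz 1)%:~R).
Proof.
case: e => [d|d].
- case: d => [|[|[|k]]].
  + rewrite (_ : Posz 0 - Posz 1 = Negz 0); last by lia.
    by rewrite /= /Rec /= !addr0 subrr mulr0.
  + rewrite (_ : Posz 1 - Posz 1 = Posz 0); last by lia.
    by rewrite /= /Rec /= !mulr0n !subr0 mulr1 mul1r subrr mulr0 !addr0.
  + rewrite (_ : Posz 2 - Posz 1 = Posz 1); last by lia.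
    rewrite (_ : Posz 2 - Posz 2 = Posz 0); last by lia.
    rewrite /= /Rec /= /PZ /Pg /prodL !big_ord1 /= !mulr0n !subr0.
    by rewrite /zc /zbc subn0 (I2 hQ) // !mulr0 !mul0r !addr0 !add0r !mulr1 mulrN.
  + rewrite (_ : Posz 2 - Posz k.+3 = Negz k); last by lia.
    by rewrite /= /Rec /= !mulr0 !mul0r !addr0 subrr.
- rewrite (_ : Posz 2 - Negz d = Posz d.+3); last by lia.
  by rewrite /= mulr0 subrr.
Qed.


Definition PZ' (m : nat) (e : int) (v : K) : F :=
  match e with Posz j => Pg (zc m) (zbc m) (m.+2%:R) j v | Negz _ => 1 end.

Lemma PZconv m e v : (m.+2 <= n)%N -> PZ m.+1 e v = PZ' m e v.
Proof.
move=> mn; case: e => [j|j] //=.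
rewrite /Pg /prodL -!big_split /=; apply: eq_bigr => i _.
rewrite /zc /zbc.
rewrite (_ : v - m.+2%:R - i%:R = (v - i%:R) - m.+2%:R); last by ring.
exact: I1.
Qed.

Definition X m (e : int) (v : K) : F :=
  match (e - 2)%R with
  | Posz k => if (k < m)%N then 0 else zc m v * Ad m k (v - 1) * zbc m (v - (e - 1)%:~R)
  | Negz _ => 0 end.

Lemma trdiff m e v :
  trZ (zc m) (zbc m) xpredT (Rd m) e v - trZ (zc m) (zbc m) (fun k => (k < m)%N) (Ad m) e v =
  zc m v * (ext (Rd m) (e - 2) (v - 1) - ext (Ad m) (e - 2) (v - 1)) * zbc m (v - (e - 1)%:~R)
  + X m e v.
Proof.
rewrite /trZ /X; case: (e - 2) => [k|k] /=.
- by case: ifP => _; ring.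
- ring.
Qed.


Lemma s1 m : (m.+2%:R : K) = m.+1%:R + 1.
Proof. by rewrite -natr1. Qed.

Lemma pa m e v :
  zc m v * (- PZ m (e - 2 - Posz m.+1) (v - 1) *
     ext (Ad m) (Posz (2 * m.+1) - (e - 2)) (v - 1 - (e - 2 - Posz m.+1)%:~R))
   * zbc m (v - (e - 1)%:~R)
  = - PZ' m (e - Posz m.+2) v *
     ext (Ad m) (Posz (2 * m.+2) - e) (v - (e - Posz m.+2)%:~R).
Proof.
rewrite (_ : Posz (2 * m.+1) - (e - 2) = Posz (2 * m.+2) - e); last by lia.
rewrite (_ : v - 1 - (e - 2 - Posz m.+1)%:~R = v - (e - Posz m.+2)%:~R); last by ring.
case: (ltrP (Posz m) (Posz (2 * m.+2) - e)) => h.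
  by rewrite ext_vanish // !mulr0 mul0r.
case: e h => [d|d] h; last by exfalso; move: h; lia.
have [j ->] : exists j, d = (j + m.+3)%N by exists (d - m.+3)%N; lia.
rewrite (_ : Posz (j + m.+3) - 2 - Posz m.+1 = Posz j); last by lia.
rewrite (_ : Posz (j + m.+3) - Posz m.+2 = Posz j.+1); last by lia.
rewrite /PZ /PZ' s1 PgA.
rewrite (_ : v - (m.+1%:R + 1) - j%:R = v - (Posz (j + m.+3) - 1)%:~R); last by ring.
ring.
Qed.


Lemma pb m e v :
  zc m v * (- PZ m (e - 1 - Posz m.+1) (v - 1) *
     ext (Ad m) (Posz (2 * m.+1) - (e - 1)) (v - 1 - (e - 1 - Posz m.+1)%:~R))
  = - PZ' m (e - Posz m.+2) v *
     (zc m (v - (e - Posz m.+2)%:~R) *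
      ext (Ad m) (Posz (2 * m.+2) - e - 1) (v - (e - Posz m.+2)%:~R - 1)).
Proof.
rewrite (_ : Posz (2 * m.+1) - (e - 1) = Posz (2 * m.+2) - e - 1); last by lia.
rewrite (_ : v - 1 - (e - 1 - Posz m.+1)%:~R = v - (e - Posz m.+2)%:~R - 1); last by ring.
case: (ltrP (Posz m) (Posz (2 * m.+2) - e - 1)) => h.
  by rewrite ext_vanish // !mulr0.
case: e h => [d|d] h; last by exfalso; move: h; lia.
have [j ->] : exists j, d = (j + m.+2)%N by exists (d - m.+2)%N; lia.
rewrite (_ : Posz (j + m.+2) - 1 - Posz m.+1 = Posz j); last by lia.
rewrite (_ : Posz (j + m.+2) - Posz m.+2 = Posz j); last by lia.
rewrite /PZ /PZ' s1.
have := PgB (zc m) (zbc m) (m.+1%:R) j v.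
rewrite (_ : v - (Posz j)%:~R = v - j%:R) // => E.
set A := ext _ _ _.
transitivity (- (Pg (zc m) (zbc m) (m.+1%:R + 1) j v * zc m (v - j%:R)) * A); last by ring.
rewrite E; ring.
Qed.

Lemma pc m e v :
  (- PZ m (e - 1 - Posz m.+1) v *
     ext (Ad m) (Posz (2 * m.+1) - (e - 1)) (v - (e - 1 - Posz m.+1)%:~R))
   * zbc m (v - (e - 1)%:~R)
  = - PZ' m (e - Posz m.+2) v *
     (ext (Ad m) (Posz (2 * m.+2) - e - 1) (v - (e - Posz m.+2)%:~R) *
      zbc m (v - (e - Posz m.+2)%:~R - (Posz (2 * m.+2) - e - 1)%:~R)).
Proof.
rewrite (_ : Posz (2 * m.+1) - (e - 1) = Posz (2 * m.+2) - e - 1); last by lia.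
rewrite (_ : v - (e - 1 - Posz m.+1)%:~R = v - (e - Posz m.+2)%:~R); last by ring.
case: (ltrP (Posz m) (Posz (2 * m.+2) - e - 1)) => h.
  by rewrite ext_vanish // !(mulr0, mul0r).
case: e h => [d|d] h; last by exfalso; move: h; lia.
have [j ->] : exists j, d = (j + m.+2)%N by exists (d - m.+2)%N; lia.
rewrite (_ : Posz (j + m.+2) - 1 - Posz m.+1 = Posz j); last by lia.
rewrite (_ : Posz (j + m.+2) - Posz m.+2 = Posz j); last by lia.
rewrite /PZ /PZ' s1.
have := PgC (zc m) (zbc m) (m.+1%:R) j v.
rewrite (_ : v - (Posz j)%:~R - (Posz (2 * m.+2) - Posz (j + m.+2) - 1)%:~R = v - m.+1%:R); last by ring.
rewrite (_ : v - (Posz (j + m.+2) - 1)%:~R = v - m.+1%:R - j%:R); last by ring.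
move=> E; set A := ext _ _ _.
transitivity (- (Pg (zc m) (zbc m) (m.+1%:R + 1) j v * zbc m (v - m.+1%:R)) * A); last by ring.
rewrite E; ring.
Qed.


Lemma X0 m e v : (forall k, e - 2 = Posz k -> k != m) -> X m e v = 0.
Proof.
rewrite /X => H; case E: (e - 2) => [k|k] //; case: ifP => // /negbT km.
by rewrite Ad_vanish ?mulr0 ?mul0r //; have := H k E; lia.
Qed.

Lemma trZ0 m E w :
  (forall k, E - 2 = Posz k -> (m <= k)%N) ->
  trZ (zc m) (zbc m) (fun k => (k < m)%N) (Ad m) E w = 0.
Proof.
rewrite /trZ => H; case e: (E - 2) => [k|k] //.
by rewrite ltnNge H.
Qed.

Lemma pd m e v :
  - PZ m (e - Posz m.+1) v *
     ext (Ad m) (Posz (2 * m.+1) - e) (v - (e - Posz m.+1)%:~R) + X m e v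
  = - PZ' m (e - Posz m.+2) v *
     trZ (zc m) (zbc m) (fun k => (k < m)%N) (Ad m) (Posz (2 * m.+2) - e)
        (v - (e - Posz m.+2)%:~R).
Proof.
case: e => [d|d]; last first.
  rewrite ext_vanish; last by lia.
  rewrite X0; last by move=> k; lia.
  rewrite trZ0; last by move=> k; lia.
  by rewrite !mulr0 addr0.
have [dA|dA] := leqP d m.+1.
  rewrite ext_vanish; last by lia.
  rewrite X0; last by move=> k; lia.
  rewrite trZ0; last by move=> k; lia.
  by rewrite !mulr0 addr0.
have [dD|dD] := leqP (2 * m.+1).+1 d.
  rewrite (_ : Posz (2 * m.+1) - Posz d = Negz (d - (2 * m.+1).+1)); last by lia.
  rewrite X0; last by move=> k; lia.
  rewrite trZ0; last by move=> k; lia.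
  by rewrite /= !mulr0 addr0.
have [->|dC] := eqVneq d m.+2.
  rewrite trZ0; last by move=> k; lia.
  rewrite (_ : Posz m.+2 - Posz m.+1 = Posz 1); last by lia.
  rewrite (_ : Posz (2 * m.+1) - Posz m.+2 = Posz m); last by lia.
  rewrite /X (_ : Posz m.+2 - 2 = Posz m); last by lia.
  rewrite ltnn /PZ /Pg /prodL !big_ord1 /= !subr0.
  rewrite (_ : v - (Posz 1)%:~R = v - 1) //.
  rewrite (_ : v - (Posz m.+2 - 1)%:~R = v - m.+1%:R); last by ring.
  rewrite mulr0; ring.
have [j [-> j1 jm]] : exists j, [/\ d = (j + m.+2)%N, (1 <= j)%N & (j <= m)%N].
  by exists (d - m.+2)%N; split; lia.
rewrite X0; last by move=> k; lia.
rewrite addr0.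
rewrite (_ : Posz (j + m.+2) - Posz m.+1 = Posz j.+1); last by lia.
rewrite (_ : Posz (j + m.+2) - Posz m.+2 = Posz j); last by lia.
rewrite (_ : Posz (2 * m.+1) - Posz (j + m.+2) = Posz (m - j)); last by lia.
rewrite /trZ (_ : Posz (2 * m.+2) - Posz (j + m.+2) - 2 = Posz (m - j)); last by lia.
rewrite (_ : (m - j < m)%N); last by lia.
rewrite /PZ /PZ' -PgD -s1.
rewrite (_ : v - (Posz j)%:~R - 1 = v - (Posz j.+1)%:~R); last by ring.
rewrite (_ : v - (Posz j)%:~R - (Posz (2 * m.+2) - Posz (j + m.+2) - 1)%:~R = v - m.+1%:R); last by ring.
rewrite (_ : (Posz j)%:~R = j%:R :> K) //.
rewrite /ext; ring.
Qed.


Lemma main_all m : (m < n)%N -> forall (e : int) (v : K),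
  ext (Rd m) e v - ext (Ad m) e v =
  - PZ m (e - Posz m.+1) v * ext (Ad m) (Posz (2 * m.+1) - e) (v - (e - Posz m.+1)%:~R).
Proof.
elim: m => [|m IH] hm e v; first exact: main_base.
have IHr : forall e w, ext (Rd m) e w = ext (Ad m) e w +
   (- PZ m (e - Posz m.+1) w * ext (Ad m) (Posz (2 * m.+1) - e) (w - (e - Posz m.+1)%:~R)).
  by move=> e' w; rewrite -(IH (ltnW hm)); ring.
rewrite (PZconv _ _ hm).
change (Rd m.+1) with (Rec (zc m) (zbc m) xpredT (Rd m)).
change (Ad m.+1) with (Rec (zc m) (zbc m) (fun k => (k < m)%N) (Ad m)).
rewrite !ext_Rec.
have T := trdiff m e v.
set tR := trZ _ _ xpredT (Rd m) e v in T *.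
have -> : tR = trZ (zc m) (zbc m) (fun k => (k < m)%N) (Ad m) e v +
   (zc m v * (ext (Rd m) (e - 2) (v - 1) - ext (Ad m) (e - 2) (v - 1)) * zbc m (v - (e - 1)%:~R)
     + X m e v) by rewrite -T; ring.
rewrite !mulrDr -(pa m e v) -(pb m e v) -(pc m e v) -(pd m e v).
rewrite !IHr.
ring.
Qed.


Lemma final_eq m a v : m.+1 = n -> (a <= m.+1)%N -> Ad m.+1 a v = Rd m.+1 a v.
Proof.
move=> hmn ha.
have hm : (m < n)%N by lia.
have Dz : forall (e : int) w, e <= Posz m.+1 -> ext (Rd m) e w = ext (Ad m) e w.
  move=> e w he; apply/eqP; rewrite -subr_eq0; apply/eqP.
  rewrite (main_all hm) ext_vanish ?mulr0 ?oppr0 //; lia.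
change (ext (Ad m.+1) (Posz a) v = ext (Rd m.+1) (Posz a) v).
change (Rd m.+1) with (Rec (zc m) (zbc m) xpredT (Rd m)).
change (Ad m.+1) with (Rec (zc m) (zbc m) (fun k => (k < m)%N) (Ad m)).
rewrite !ext_Rec !Dz; try lia.
congr (_ + _).
rewrite /trZ; case E: (Posz a - 2) => [k|k] //.
rewrite (_ : (k < m)%N); last by lia.
have := Dz (Posz k) (v - 1); rewrite /= => ->; last by lia.
by [].
Qed.

Definition gm (m : nat) : nat -> K -> F :=
  fun p => if (p < m)%N then zU n Q (n.+1 - m + p) else zB n Q (n + m - p).

Definition gRm (m : nat) : nat -> K -> F :=
  fun p => if (p < m)%N then zU n Q (n.+1 - m + p)
    else if p == m then xmid n Q
    else if p == m.+1 then (fun u => - xmid n Q u)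
    else zB n Q (n + m.+2 - p).

Lemma Rec_ext (z z' zb zb' : K -> F) (tr : nat -> bool) (G G' : nat -> K -> F) (d : nat) (v : K) :
  (forall w, z w = z' w) -> (forall w, zb w = zb' w) -> (forall d w, G d w = G' d w) ->
  Rec z zb tr G d v = Rec z' zb' tr G' d v.
Proof.
move=> h1 h2 h3; rewrite /Rec; case: d => [|[|d]]; by rewrite ?h1 ?h2 ?h3.
Qed.

Lemma SA_ext m N (g g' : nat -> K -> F) d (v : K) : (forall p w, g p w = g' p w) -> SA m N g d v = SA m N g' d v.
Proof.
move=> h; apply: eq_bigr => i _; case: ifP => // _; apply: eq_bigr => k _; exact: h.
Qed.

Lemma Ssum_ext N (g g' : nat -> K -> F) d (v : K) : (forall p w, g p w = g' p w) -> Ssum N g d v = Ssum N g' d v.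
Proof.
move=> h; apply: eq_bigr => i _; apply: eq_bigr => k _; exact: h.
Qed.

Lemma SA_Ad m : (m <= n)%N -> forall d v, SA m (2 * m) (gm m) d v = Ad m d v.
Proof.
elim: m => [|m IH] hm d v.
  case: d => [|d]; first by rewrite SA0.
  by rewrite SAE0.
rewrite (_ : (2 * m.+1 = (2 * m).+2)%N); last by lia.
rewrite SA_peel /=.
apply: Rec_ext.
- move=> w; rewrite /gm /zc /=; congr zU; lia.
- move=> w; rewrite /gm /zbc (_ : ((2 * m).+1 < m.+1)%N = false); last by lia.
  congr zB; lia.
- move=> d' w; rewrite -IH; last by lia.
  apply: SA_ext => p w'; rewrite /sh /gm ltnS; case: ifP => _; [congr zU|congr zB]; lia.
Qed.

Lemma Ssum_Rd m : (m <= n)%N -> forall d v, Ssum (2 * m).+2 (gRm m) d v = Rd m d v.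
Proof.
elim: m => [|m IH] hm d v.
  rewrite Ssum_peel /=; apply: Rec_ext => //.
  move=> d' w; case: d' => [|d']; first by rewrite Ssum0.
  by rewrite SsumE0.
rewrite (_ : (2 * m.+1 = (2 * m).+2)%N); last by lia.
rewrite Ssum_peel /=.
apply: Rec_ext.
- move=> w; rewrite /gRm /zc /=; congr zU; lia.
- move=> w; rewrite /gRm /zbc (_ : ((2 * m).+3 < m.+1)%N = false); last by lia.
  rewrite (_ : ((2 * m).+3 == m.+1) = false); last by lia.
  rewrite (_ : ((2 * m).+3 == m.+2) = false); last by lia.
  congr zB; lia.
- move=> d' w; rewrite -IH; last by lia.
  apply: Ssum_ext => p w'; rewrite /sh /gRm ltnS eqSS eqSS.
  case: ifP => _; first by congr zU; lia.
  case: ifP => // _; case: ifP => // _; congr zB; lia.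
Qed.

End Main.

Local Open Scope ring_scope.

Unset Implicit Arguments.

Theorem mainTheorem3 (K : numFieldType) (F : fieldType) (n : nat)
  (Q : nat -> K -> F) :
  (2 <= n)%N ->
  (forall (a : nat) (u : K), (1 <= a <= n)%N -> Q a u != 0) ->
  forall (a : nat), (1 <= a <= n)%N -> forall u : K,
    T1 n Q a u =
    \sum_(i : {ffun 'I_a -> 'I_(2 * n + 2)} | incr i)
      \prod_(k < a) x n Q (i k).+1 (u + hlf K a - (k.+1)%:R).
Proof.
move=> hn2 hQ a ha u.
have hn : (1 <= n)%N by lia.
set v := u + hlf K a - 1.
have L : T1 n Q a u = SA n (2 * n) (gm n Q n) a v.
  rewrite /T1 /Tsum /SA big_mkcondr /=; apply: eq_bigr => i _.
  change (admissible i) with (admN n i); case: ifP => // _.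
  apply: eq_bigr => k _.
  rewrite /zJ /gm; case: ifP => _.
  + rewrite (_ : (n.+1 - n + i k = (i k).+1)%N); last by lia.
    congr zU; rewrite /v (_ : (2 * k.+1 - 1 = 2 * k + 1)%N); last by lia.
    by rewrite !hlfE; field.
    rewrite (_ : (n + n - i k = 2 * n - i k)%N); last by lia.
    congr zB; rewrite /v (_ : (2 * k.+1 - 1 = 2 * k + 1)%N); last by lia.
    by rewrite !hlfE; field.
have R : \sum_(i : {ffun 'I_a -> 'I_(2 * n + 2)} | incr i)
      \prod_(k < a) x n Q (i k).+1 (u + hlf K a - (k.+1)%:R)
    = Ssum (2 * n + 2) (gRm n Q n) a v.
  apply: eq_bigr => i _; apply: eq_bigr => k _.
  rewrite (_ : u + hlf K a - k.+1%:R = v - k%:R); last by rewrite /v; ring.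
  rewrite /x /gRm.
  have := ltn_ord (i k); move: (nat_of_ord (i k)) => p hp.
  case: (ltnP p n) => hpn.
  + by congr zU; lia.
  + rewrite eqSS eqSS.
    case: eqP => // _; case: eqP => // _.
    congr zB; lia.
rewrite L R (_ : (2 * n + 2 = (2 * n).+2)%N); last by lia.
rewrite (SA_Ad Q hn (leqnn n)) (Ssum_Rd Q hn (leqnn n)).
have := @final_eq K F n Q hQ hn n.-1 a v (prednK hn) (_ : (a <= n.-1.+1)%N).
rewrite prednK //; apply; lia.
Qed.
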